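(* Let $I=\bigcup_{n\in\mathbb N}I_n$ be a partition of a countable set $I$ into nonempty finite pieces and let $\mathcal F$ be a $T$-family on $I$ with respect to this partition. Then for every $0<\lambda<1$ and every finitely supported sequence of scalars $(a_n)_n$, $$\lambda\Big\|\sum_n a_nu_n\Big\|_{\mathcal G_\lambda(\mathcal F)}\le\max\Big\{\Big\|\sum_n a_n\Big(\frac1{\#I_n}\sum_{j\in I_n}u_j\Big)\Big\|_{\mathcal F},\ \sup_n|a_n|\Big\}\le\Big\|\sum_na_nu_n\Big\|_{\mathcal G_+(\mathcal F)},$$ where on the left and right $(u_n)_{n\in\mathbb N}$ is the unit basis of $c_{00}(\mathbb N)$ and in the middle $(u_j)_{j\in I}$ is the unit basis of $c_{00}(I)$.
   Context: A family on a set $J$ is a collection of finite subsets of $J$. For a family $\mathcal H$ on $J$, $\|x\|_{\mathcal H}=\max\{\|x\|_\infty,\sup_{s\in\mathcal H}\sum_{j\in s}|(x)_j|\}$ for $x\in c_{00}(J)$. A family $\mathcal H$ is $n$-large in $J$ if for every infinite $K\subseteq J$ there is $s\in\mathcal H$ with $\#(s\cap K)\ge n$, and large in $J$ if it is $n$-large for every $n$; it is pre-compact if every set in its closure in $2^J$ (product topology) is finite. For $s\subseteq I$ finite and $0<\lambda<1$: $s[\lambda]=\{n: \#(s\cap I_n)\ge\lambda\#I_n\}$, $s[+]=\{n: s\cap I_n\neq\emptyset\}$, $\mathcal G_\lambda(\mathcal F)=\{s[\lambda]:s\in\mathcal F\}$, $\mathcal G_+(\mathcal F)=\{s[+]:s\in\mathcal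 F\}$ (families on $\mathbb N$). A pre-compact family $\mathcal F$ on $I$ is a $T$-family (w.r.t. $(I_n)_n$) if $\mathcal F$ is not large in any infinite $J\subseteq I$ and there is $0<\lambda\le1$ such that $\mathcal G_\lambda(\mathcal F)$ is large in $\mathbb N$. *)

(* Defs.v *)
From HB Require Import structures.
From mathcomp Require Import all_boot all_order all_algebra.
From mathcomp Require Import all_classical all_reals all_analysis.
From mathcomp Require Import finmap.
Set Implicit Arguments. Unset Strict Implicit. Unset Printing Implicit Defensive.
Import Order.TTheory GRing.Theory Num.Theory.
Local Open Scope classical_set_scope.
Local Open Scope ring_scope.

Definition is_family {J : Type} (H : set (set J)) : Prop :=
  forall s, H s -> finite_set s.

Definition ncard {J : choiceType} (A : set J) : nat := #|` fset_set A|%fset.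

Definition fam_norm {R : realType} {J : choiceType} (H : set (set J))
    (x : J -> R) : \bar R :=
  maxe (ereal_sup (range (fun j => (`|x j|)%:E)))
       (ereal_sup [set (\sum_(j \in s) `|x j|)%:E | s in H]).

Definition n_large {I : choiceType} (n : nat) (H : set (set I)) (J : set I) : Prop :=
  forall K : set I, K `<=` J -> infinite_set K ->
    exists2 s, H s & (n <= ncard (s `&` K))%N.

Definition large {I : choiceType} (H : set (set I)) (J : set I) : Prop :=
  forall n, n_large n H J.

Definition indicator {J : Type} (s : set J) : {ptws J -> bool} :=
  fun j => `[< s j >].

(* pre-compact: every set in the closure of H in 2^J (product topology)
   is finite *)
Definition precompact {J : Type} (H : set (set J)) : Prop :=
  forall A : {ptws J -> bool}, closure (indicator @` H) A ->
    finite_set [set j | A j].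

Definition s_lambda {R : realType} {I : choiceType} (Ip : nat -> set I)
    (lam : R) (s : set I) : set nat :=
  [set n | lam * (ncard (Ip n))%:R <= (ncard (s `&` Ip n))%:R].

Definition s_plus {I : Type} (Ip : nat -> set I) (s : set I) : set nat :=
  [set n | s `&` Ip n !=set0].

Definition G_lambda {R : realType} {I : choiceType} (Ip : nat -> set I)
    (lam : R) (F : set (set I)) : set (set nat) :=
  s_lambda Ip lam @` F.

Definition G_plus {I : Type} (Ip : nat -> set I) (F : set (set I)) :
    set (set nat) :=
  s_plus Ip @` F.

Definition T_family (R : realType) {I : choiceType} (Ip : nat -> set I)
    (F : set (set I)) : Prop :=
  [/\ is_family F, precompact F,
      (forall J : set I, infinite_set J -> ~ large F J) &
      exists lam : R, 0 < lam <= 1 /\ large (G_lambda Ip lam F) [set: nat]].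

Definition finite_partition {I : Type} (Ip : nat -> set I) : Prop :=
  [/\ forall n, finite_set (Ip n),
      forall n, Ip n !=set0,
      trivIset [set: nat] Ip &
      \bigcup_n Ip n = [set: I]].

(* Main.v *)
Require Import Defs.
From HB Require Import structures.
From mathcomp Require Import all_boot all_order all_algebra.
From mathcomp Require Import all_classical all_reals all_analysis.
From mathcomp Require Import finmap.
Import Order.TTheory GRing.Theory Num.Theory.
Local Open Scope classical_set_scope.
Local Open Scope ring_scope.

Lemma ncard0 (T : choiceType) : ncard (set0 : set T) = 0%N.
Proof. by rewrite /ncard fset_set0 cardfs0. Qed.

Lemma ncard_le (T : choiceType) (A B : set T) :
  finite_set B -> A `<=` B -> (ncard A <= ncard B)%N.
Proof.
move=> fB AB; have fA : finite_set A by exact: sub_finite_set fB.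
by apply: fsubset_leq_card; rewrite -fset_set_sub.
Qed.

Lemma ncard_gt0 (T : choiceType) (A : set T) :
  finite_set A -> A !=set0 -> (0 < ncard A)%N.
Proof.
move=> fA [x Ax]; rewrite /ncard cardfs_gt0; apply/eqP => h.
have : x \in fset_set A by rewrite in_fset_set // mem_set.
by rewrite h.
Qed.

Lemma sum_indic (R : realType) (T : choiceType) (S A : set T) :
  finite_set S ->
  \sum_(j <- fset_set S) (\1_A j : R) = (ncard (S `&` A))%:R.
Proof.
move=> fS; rewrite -fsbig_finite //.
transitivity (\sum_(j \in S) (if j \in A then 1 else 0 : R)).
  by apply: eq_fsbigr => j _; rewrite indicE; case: (j \in A).
rewrite -fsbig_mkcondr fsbig_finite; last exact: finite_setIl.
by rewrite /ncard -sum1_size natr_sum.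
Qed.

Lemma abs_sum_disj (R : realType) (N : nat) (P : 'I_N -> Prop) (F : 'I_N -> R) :
  (forall i k, P i -> P k -> i = k) -> (forall i, ~ P i -> F i = 0) ->
  `|\sum_(i < N) F i| = \sum_(i < N) `|F i|.
Proof.
move=> uP FP; case: (pselect (exists m, P m)) => [[m Pm]|nP].
  rewrite (bigD1 m) //= big1; last first.
    by move=> i im; apply: FP => Pi; move: im; rewrite (uP _ _ Pi Pm) eqxx.
  rewrite (bigD1 m) //= big1; last first.
    by move=> i im; rewrite FP ?normr0 // => Pi; move: im; rewrite (uP _ _ Pi Pm) eqxx.
  by rewrite !addr0.
rewrite big1 ?normr0; last by move=> i _; apply: FP => Pi; apply: nP; exists i.
by rewrite big1 // => i _; rewrite FP ?normr0 // => Pi; apply: nP; exists i.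
Qed.

Lemma midsum (R : realType) (I : choiceType) (Ip : nat -> set I) (N : nat)
  (a : nat -> R) (s : set I) : finite_partition Ip ->
  \sum_(j \in s) `|\sum_(n < N) a n * ((ncard (Ip n))%:R)^-1 * \1_(Ip n) j| =
  \sum_(n < N) `|a n| * ((ncard (Ip n))%:R)^-1 * (ncard (s `&` Ip n))%:R.
Proof.
case=> fin ne triv cov.
have disj : forall i k j, Ip i j -> Ip k j -> i = k.
  by move=> i k j hi hk; apply: triv => //; exists j.
have pw : forall j,
  `|\sum_(n < N) a n * ((ncard (Ip n))%:R)^-1 * \1_(Ip n) j| =
  \sum_(n < N) `|a n| * ((ncard (Ip n))%:R)^-1 * \1_(Ip n) j.
  move=> j; rewrite (@abs_sum_disj R N (fun i => Ip i j)); last 2 first.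
  - by move=> i k hi hk; apply: val_inj; exact: disj hi hk.
  - by move=> i hi; rewrite indicE memNset ?mulr0.
  apply: eq_bigr => n _; rewrite !normrM indicE.
  rewrite (ger0_norm (x := (_ \in _)%:R)) ?ler0n //.
  by rewrite (ger0_norm (x := _^-1)) // invr_ge0 ler0n.
rewrite (eq_fsbigr (fun j => \sum_(n < N) `|a n| * ((ncard (Ip n))%:R)^-1 * \1_(Ip n) j)); last by move=> j _; exact: pw.
pose U := \bigcup_(n in `I_N) Ip n.
have fU : finite_set U.
  by apply: bigcup_finite => //; exact: finite_II.
rewrite -(fsbig_widen (s `&` U) s); last 2 first.
- by apply: subIsetl.
- move=> j [sj /not_andP[//|nU]]; rewrite /preimage /=.
  apply: big1 => n _; rewrite indicE memNset ?mulr0 // => hn.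
  by apply: nU; exists n => //=.
rewrite fsbig_finite; last exact: finite_setIr.
rewrite exchange_big /=; apply: eq_bigr => n _.
rewrite -mulr_sumr sum_indic; last exact: finite_setIr.
congr (_ * (ncard _)%:R); apply/seteqP; split => j /=.
  by case=> [[sj _] ipj].
by case=> sj ipj; split => //; split => //; exists n => //=.
Qed.

Lemma sumN (R : realType) (a : nat -> R) (N : nat) (X : set nat) :
  (forall n, (N <= n)%N -> a n = 0) ->
  \sum_(n \in X) `|a n| = \sum_(n < N) (if (n : nat) \in X then `|a n| else 0).
Proof.
move=> ha; rewrite -(fsbig_widen (X `&` `I_N) X); last 2 first.
- exact: subIsetl.
- move=> n [Xn /not_andP[//|nN]]; rewrite /preimage /= ha ?normr0 //.
  by rewrite leqNgt; apply/negP.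
by rewrite fsbig_mkcondl -fsbig_ord.
Qed.

Theorem proposition4p3 (R : realType) (I : choiceType) (Ip : nat -> set I)
    (F : set (set I)) :
  finite_partition Ip -> T_family R Ip F ->
  forall (lam : R), 0 < lam < 1 ->
  forall (a : nat -> R) (N : nat), (forall n, (N <= n)%N -> a n = 0) ->
  let mid : I -> R := fun j =>
    \sum_(n < N) a n * ((ncard (Ip n))%:R)^-1 * \1_(Ip n) j in
  ((lam%:E * fam_norm (G_lambda Ip lam F) a
      <= maxe (fam_norm F mid) (ereal_sup (range (fun n => (`|a n|)%:E))))
   /\ (maxe (fam_norm F mid) (ereal_sup (range (fun n => (`|a n|)%:E)))
      <= fam_norm (G_plus Ip F) a))%E.
Proof.
move=> hp _ lam /andP[lam0 lam1] a N ha mid.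
have hp' := hp; case: hp' => fin ne triv cov.
have c0 : forall n, (0 < ncard (Ip n))%N by move=> n; exact: ncard_gt0.
have c0R : forall n, 0 < ((ncard (Ip n))%:R : R) by move=> n; rewrite ltr0n.
set A := ereal_sup (range (fun n => (`|a n|)%:E)).
have ubA : forall n, ((`|a n|)%:E <= A)%E.
  by move=> n; apply: ereal_sup_ubound; exists n.
have A0 : (0 <= A)%E by apply: le_trans (ubA 0%N); rewrite lee_fin.
have ms : forall s, \sum_(j \in s) `|mid j| =
    \sum_(n < N) `|a n| * ((ncard (Ip n))%:R)^-1 * (ncard (s `&` Ip n))%:R.
  by move=> s; rewrite /mid midsum.
set BF := ereal_sup [set (\sum_(j \in s) `|mid j|)%:E | s in F].
have BFM : (BF <= fam_norm F mid)%E by rewrite /fam_norm le_max lexx orbT.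
split.
-
  have h1 : (lam%:E * A <= A)%E by apply: gee_pMl => //; rewrite lee_fin ltW.
  have h2 : (lam%:E * ereal_sup [set (\sum_(n \in t) `|a n|)%:E | t in G_lambda Ip lam F]
             <= fam_norm F mid)%E.
    rewrite -ereal_sup_pZl //; apply: ge_ereal_sup => x [y [t [s Fs <-] <-] <-].
    apply: le_trans BFM; apply: le_ereal_sup_tmp.
    exists (\sum_(j \in s) `|mid j|)%:E; first by exists s.
    rewrite lee_fin (@sumN _ a N _ ha) ms mulr_sumr; apply: ler_sum => n _.
    case: ifP => hn; last first.
      by rewrite mulr0 mulr_ge0 // ?mulr_ge0 // invr_ge0 ler0n.
    move: hn => /set_mem; rewrite /s_lambda /= => hn.
    rewrite mulrC -mulrA ler_wpM2l //.
    by rewrite ler_pdivlMl // mulrC.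
  rewrite /fam_norm -/A maxEle; case: ifP => _.
    by rewrite le_max h2.
  by apply: le_trans h1 _; rewrite le_max lexx orbT.
-
  rewrite ge_max /fam_norm -/A; apply/andP; split; last by rewrite le_max lexx.
  rewrite ge_max; apply/andP; split.
    rewrite le_max; apply/orP; left.
    apply: ge_ereal_sup => x [j _ <-].
    have [m _ jm] : (\bigcup_n Ip n) j by rewrite cov.
    apply: le_trans (ubA m); rewrite lee_fin /mid.
    rewrite (@abs_sum_disj R N (fun i => Ip i j)); last 2 first.
    - by move=> i k hi hk; apply: val_inj; apply: triv => //; exists j.
    - by move=> i hi; rewrite indicE memNset ?mulr0.
    case: (ltnP m N) => mN.
      rewrite (bigD1 (Ordinal mN)) //= big1; last first.
        move=> i im; rewrite indicE memNset ?mulr0 ?normr0 // => hi.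
        move: im; suff -> : i = Ordinal mN by rewrite eqxx.
        by apply: val_inj; apply: triv => //; exists j.
      rewrite addr0 indicE mem_set // mulr1 normrM (ger0_norm (x := _^-1)) ?invr_ge0 ?ler0n //.
      by rewrite ler_piMr // invf_le1 // ler1n.
    rewrite ha // normr0 big1 // => i _.
    rewrite indicE memNset ?mulr0 ?normr0 // => hi.
    suff him : (i : nat) = m by move: (ltn_ord i); rewrite him ltnNge mN.
    by apply: triv => //; exists j.
  rewrite le_max; apply/orP; right.
  apply: ge_ereal_sup => x [s Fs <-]; apply: le_ereal_sup_tmp.
  exists (\sum_(n \in s_plus Ip s) `|a n|)%:E; first by exists (s_plus Ip s) => //; exists s.
  rewrite lee_fin (@sumN _ a N _ ha) ms; apply: ler_sum => n _.
  case: ifP => hn.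
    rewrite -mulrA ler_piMr // ler_pdivrMl // mulr1 ler_nat.
    by apply: ncard_le => //; exact: subIsetr.
  have -> : s `&` Ip n = set0.
    apply/eqP; apply: contraFT hn => /set0P h; exact: mem_set.
  by rewrite ncard0 mulr0.
Qed.
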